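(* Let $n,k$ be integers with $2\leq k\leq n-2$. The sparse paving positroids on ground set $[n]$ of rank $k$ are in bijection with the non-adjacent subsets of $[n]$, via the map sending the positroid with Grassmann necklace $(I_1,\dots,I_n)$ to $\{i\in[n]: I_i\neq C_{k,n}^{(i)}\}$.
   Context: A subset $A\subseteq[n]$ is non-adjacent if whenever $i\in A$ we have $i-1\notin A$ and $i+1\notin A$, considered modulo $n$ (so $1$ and $n$ are adjacent). For $t\in[n]$, the order $<_t$ on $[n]$ is $t <_t t+1 <_t \cdots <_t n <_t 1 <_t \cdots <_t t-1$. For $k$-subsets $I=\{a_1<_t\cdots<_t a_k\}$, $J=\{b_1<_t\cdots<_t b_k\}$ write $I\leq_t J$ if $a_i\leq_t b_i$ for all $i$. A positroid of rank $k$ on $[n]$ is a matroid whose bases are $\bigcap_{t=1}^n\{J\in\binom{[n]}{k}: I_t\leq_t J\}$ for some Grassmann necklace $(I_1,\dots,I_n)$, i.e. a sequence of $k$-subsets of $[n]$ with (indices mod $n$) $I_{i+1}=(I_i\setminus\{i\})\cup\{j\}$ for some $j$ if $i\in I_i$, and $I_{i+1}=I_i$ if $i\notin I_i$; then $I_t$ is the $\leq_t$-minimal basis. $C_{k,n}^{(i)}=\{i,i+1,\dots,i+k-1\}$ modulo $n$ with representatives in $[n]$. A rank-$k$ matroid is paving if every circuit has size at least $k$, and sparse paving if it and its dual are paving. *)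

(* Defs.v *)
(* Ground set [n] is modelled by 'I_n : element i : 'I_n
   stands for i+1 in [n]. *)
From mathcomp Require Import all_boot.
Set Implicit Arguments.
Unset Strict Implicit.
Unset Printing Implicit Defensive.

Section Positroids.
Variable n : nat.

Definition nsucc (i : 'I_n) : 'I_n := ordS i.
Definition npred (i : 'I_n) : 'I_n := ord_pred i.

(* position of x in the order <_t : t <_t t+1 <_t ... <_t t-1 *)
Definition trank (t x : 'I_n) : nat := (x + n - t) %% n.

Definition le_t (t x y : 'I_n) : bool := trank t x <= trank t y.

(* I <=_t J (Gale order): writing I = {a_1 <_t ... <_t a_k} and
   J = {b_1 <_t ... <_t b_k}, a_i <=_t b_i for all i.  Elements are listed
   in <_t-increasing order via their <_t-positions (trank t is injective). *)
Definition gale_le (t : 'I_n) (I J : {set 'I_n}) : bool :=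
  (#|I| == #|J|) &&
  all2 leq (sort leq [seq trank t x | x <- enum I])
           (sort leq [seq trank t x | x <- enum J]).

Definition non_adjacent (A : {set 'I_n}) : bool :=
  [forall i, (i \in A) ==> (npred i \notin A) && (nsucc i \notin A)].

(* C_{k,n}^{(i)} = {i, i+1, ..., i+k-1} mod n *)
Definition cyc_interval (k : nat) (i : 'I_n) : {set 'I_n} :=
  [set x | trank i x < k].

Definition grassmann_necklace (k : nat) (I : 'I_n -> {set 'I_n}) : Prop :=
  (forall i, #|I i| = k) /\
  (forall i, if i \in I i then exists j, I (nsucc i) = (I i :\ i) :|: [set j]
             else I (nsucc i) = I i).

Definition necklace_bases (k : nat) (I : 'I_n -> {set 'I_n})
  : {set {set 'I_n}} :=
  [set J : {set 'I_n} | (#|J| == k) && [forall t, gale_le t (I t) J]].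

Definition is_matroid (B : {set {set 'I_n}}) : Prop :=
  B != set0 /\
  forall B1 B2, B1 \in B -> B2 \in B -> forall x, x \in B1 :\: B2 ->
    exists2 y, y \in B2 :\: B1 & (B1 :\ x) :|: [set y] \in B.

Definition has_rank (k : nat) (B : {set {set 'I_n}}) : Prop :=
  forall J, J \in B -> #|J| = k.

Definition positroid (k : nat) (B : {set {set 'I_n}}) : Prop :=
  is_matroid B /\ has_rank k B /\
  exists I, grassmann_necklace k I /\ B = necklace_bases k I.

Definition independent (B : {set {set 'I_n}}) (X : {set 'I_n}) : bool :=
  [exists J in B, X \subset J].

Definition circuit (B : {set {set 'I_n}}) (C : {set 'I_n}) : bool :=
  ~~ independent B C && [forall x in C, independent B (C :\ x)].

Definition paving (k : nat) (B : {set {set 'I_n}}) : Prop :=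
  forall C, circuit B C -> k <= #|C|.

Definition dual_bases (B : {set {set 'I_n}}) : {set {set 'I_n}} :=
  [set ~: J | J in B].

Definition sparse_paving (k : nat) (B : {set {set 'I_n}}) : Prop :=
  paving k B /\ paving (n - k) (dual_bases B).

Definition necklace_of (B : {set {set 'I_n}}) (t : 'I_n) : {set 'I_n} :=
  odflt set0 [pick J in B | [forall J' in B, gale_le t J J']].

Definition spp_map (k : nat) (B : {set {set 'I_n}}) : {set 'I_n} :=
  [set i | necklace_of B i != cyc_interval k i].

Definition sparse_paving_positroid (k : nat) (B : {set {set 'I_n}}) : Prop :=
  positroid k B /\ sparse_paving k B.

End Positroids.

(* Main.v *)
Require Import Defs.
From mathcomp Require Import all_boot zify.
Set Implicit Arguments.
Unset Strict Implicit.
Unset Printing Implicit Defensive.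

Section Arith.
Variable n : nat.
Implicit Types t x y : 'I_n.

Lemma trankE t x : trank t x = if t <= x then x - t else x + n - t.
Proof.
have hx := ltn_ord x; have ht := ltn_ord t.
rewrite /trank; case: leqP => h.
  by rewrite (_ : x + n - t = (x - t) + n) ?modnDr ?modn_small //; lia.
by rewrite modn_small //; lia.
Qed.

Lemma trank_lt t x : trank t x < n.
Proof. have hx := ltn_ord x; have ht := ltn_ord t; rewrite trankE; case: ifP; lia. Qed.

Lemma trank_inj t : injective (trank t).
Proof.
move=> x y; have hx := ltn_ord x; have hy := ltn_ord y; have ht := ltn_ord t.
rewrite !trankE => h; apply/val_inj => /=; move: h; do 2 case: ifP; lia.
Qed.

Lemma trank_eq t x y : (trank t x == trank t y) = (x == y).
Proof. by apply/eqP/eqP => [/trank_inj|->]. Qed.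

Lemma trank0 t x : (trank t x == 0) = (x == t).
Proof.
have hx := ltn_ord x; have ht := ltn_ord t.
apply/eqP/eqP => [|->]; last by rewrite trankE leqnn subnn.
rewrite trankE => h; apply/val_inj => /=; move: h; case: ifP; lia.
Qed.

Lemma trank_tt t : trank t t = 0.
Proof. by apply/eqP; rewrite trank0. Qed.

Lemma trank_surj t m : m < n -> exists x, trank t x = m.
Proof.
move=> hm; have ht := ltn_ord t.
have hv : (if t + m < n then t + m else t + m - n) < n by case: ifP; lia.
exists (Ordinal hv); rewrite trankE /=; do 2 case: ifP; lia.
Qed.

Lemma nsucc_val x : val (nsucc x) = if x.+1 < n then x.+1 else 0.
Proof.
have hx := ltn_ord x; rewrite /nsucc /ordS /=; case: ifP => h.
  by rewrite modn_small.
have -> : x.+1 = n by lia.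
by rewrite modnn.
Qed.

Lemma R1 t x : trank (nsucc t) x = if trank t x == 0 then n.-1 else (trank t x).-1.
Proof.
have hx := ltn_ord x; have ht := ltn_ord t.
rewrite !trankE nsucc_val; repeat case: ifP; lia.
Qed.

Lemma R2 t x : trank t (nsucc x) = if trank t x == n.-1 then 0 else (trank t x).+1.
Proof.
have hx := ltn_ord x; have ht := ltn_ord t.
rewrite !trankE nsucc_val; repeat case: ifP; lia.
Qed.

Lemma R3 t s x : trank s x =
  if trank t s <= trank t x then trank t x - trank t s else trank t x + n - trank t s.
Proof.
have hx := ltn_ord x; have ht := ltn_ord t; have hs := ltn_ord s.
rewrite !trankE; repeat case: ifP; lia.
Qed.

Lemma nsucc_npred x : nsucc (npred x) = x.
Proof. exact: ord_predK. Qed.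

Lemma R1' t x : trank (npred t) x = if trank t x == n.-1 then 0 else (trank t x).+1.
Proof.
have h := R1 (npred t) x; rewrite nsucc_npred in h; rewrite h.
have := trank_lt (npred t) x; move: (trank (npred t) x) => r.
repeat case: ifP; lia.
Qed.

Lemma card_rank t m : m <= n -> #|[set x | trank t x < m]| = m.
Proof.
elim: m => [|m IH] hm.
  by rewrite (_ : [set x | _ < 0] = set0) ?cards0 //; apply/setP => x; rewrite !inE.
have [x0 hx0] := trank_surj t hm.
rewrite (_ : [set x | _ < m.+1] = x0 |: [set x | trank t x < m]).
  by rewrite cardsU1 IH ?inE ?hx0 ?ltnn //; lia.
apply/setP => x; rewrite !inE -(trank_eq t) hx0; lia.
Qed.

End Arith.

Lemma all2_nthP (r : rel nat) (s t : seq nat) : size s = size t ->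
  reflect (forall i, i < size s -> r (nth 0 s i) (nth 0 t i)) (all2 r s t).
Proof.
elim: s t => [|x s IH] [|y t] //= hs.
  by constructor.
have {}IH := IH t (eq_add_S _ _ hs).
apply: (iffP andP) => [[hxy /IH H] [|i] // hi | H]; first exact: H.
split; first exact: (H 0).
by apply/IH => i hi; apply: (H i.+1).
Qed.

Section Gale.
Variable n : nat.
Implicit Types t x y : 'I_n.
Implicit Types X I J : {set 'I_n}.

Definition sl t X := sort leq [seq trank t x | x <- enum X].

Lemma sl_size t X : size (sl t X) = #|X|.
Proof. by rewrite size_sort size_map cardE. Qed.

Lemma sl_sorted t X : sorted ltn (sl t X).
Proof.
rewrite ltn_sorted_uniq_leq sort_uniq sort_sorted ?andbT; last exact: leq_total.
by rewrite map_inj_uniq ?enum_uniq //; apply: trank_inj.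
Qed.

Lemma sl_mem t X m : (m \in sl t X) = [exists x in X, trank t x == m].
Proof.
rewrite mem_sort; apply/mapP/existsP => [[x] | [x /andP[hx /eqP <-]]].
  by rewrite mem_enum => hx ->; exists x; rewrite hx eqxx.
by exists x; rewrite ?mem_enum.
Qed.

Lemma sl_ge t X i : i < #|X| -> i <= nth 0 (sl t X) i.
Proof.
elim: i => [|i IH] hi //.
have := @sorted_ltn_nth _ _ ltn_trans 0 _ (sl_sorted t X) i i.+1.
rewrite !inE sl_size => h; have := h (ltnW hi) hi (ltnSn i).
have := IH (ltnW hi); lia.
Qed.

Variable k : nat.
Local Notation C t := (cyc_interval k t).
Definition D t := [set x | (trank t x <= k) && (trank t x != k.-1)].

Lemma cardCk t : k <= n -> #|C t| = k.
Proof. by move=> h; rewrite /cyc_interval card_rank. Qed.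

Lemma sl_C t : k <= n -> sl t (C t) = iota 0 k.
Proof.
move=> hk.
apply: (irr_sorted_eq ltn_trans ltnn); [exact: sl_sorted | exact: iota_ltn_sorted|].
move=> m; rewrite sl_mem mem_iota add0n; apply/existsP/idP => [[x /andP[]]|hm].
  by rewrite inE => h /eqP <-; lia.
have hmn : m < n by lia.
have [x hx] := trank_surj t hmn.
by exists x; rewrite inE hx eqxx andbT; lia.
Qed.

Lemma sl_D t : 2 <= k -> k < n -> sl t (D t) = rcons (iota 0 k.-1) k.
Proof.
move=> hk2 hk.
have so : sorted ltn (rcons (iota 0 k.-1) k).
  rewrite -cats1 sorted_pairwise ?pairwise_cat; last exact: ltn_trans.
  rewrite -sorted_pairwise ?iota_ltn_sorted ?andbT; last exact: ltn_trans.
  by apply/allrelP => a b; rewrite mem_iota !inE => /andP[_ ha] /eqP ->; lia.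
apply: (irr_sorted_eq ltn_trans ltnn); [exact: sl_sorted | exact: so|].
move=> m; rewrite sl_mem mem_rcons inE mem_iota add0n; apply/existsP/idP => [[x /andP[]]|hm].
  by rewrite inE => h /eqP <-; lia.
have hmn : m < n by lia.
have [x hx] := trank_surj t hmn.
by exists x; rewrite inE hx eqxx andbT; lia.
Qed.

Lemma cardD t : 2 <= k -> k < n -> #|D t| = k.
Proof.
move=> hk2 hk; by rewrite -(sl_size t) sl_D // size_rcons size_iota; lia.
Qed.

Lemma sl_top t J : #|J| = k -> 0 < k -> k <= n -> nth 0 (sl t J) k.-1 < k -> J = C t.
Proof.
move=> hJ hk0 hk hl; apply/eqP; rewrite eqEcard cardCk // hJ leqnn andbT.
apply/subsetP => x hx; rewrite inE.
have hm : trank t x \in sl t J by rewrite sl_mem; apply/existsP; exists x; rewrite hx eqxx.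
have hi : index (trank t x) (sl t J) < k by rewrite -hJ -(sl_size t) index_mem.
have sle : sorted leq (sl t J) by move: (sl_sorted t J); rewrite ltn_sorted_uniq_leq => /andP[].
have := @sorted_leq_nth _ _ leq_trans leqnn 0 _ sle (index (trank t x) (sl t J)) k.-1.
rewrite !inE sl_size hJ nth_index // => h; have := h hi (_ : k.-1 < k); lia.
Qed.

Lemma gale_nth t I J : #|I| = #|J| ->
  gale_le t I J = [forall i : 'I_#|I|, nth 0 (sl t I) i <= nth 0 (sl t J) i].
Proof.
move=> hIJ; rewrite /gale_le {1}hIJ eqxx /=.
have hs : size (sl t I) = size (sl t J) by rewrite !sl_size.
apply/(all2_nthP _ hs)/forallP => [h i | h i hi].
  by apply: h; rewrite sl_size.
by rewrite sl_size in hi; exact: (h (Ordinal hi)).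
Qed.

Lemma G0 t J : #|J| = k -> k <= n -> gale_le t (C t) J.
Proof.
move=> hJ hk; rewrite gale_nth ?cardCk ?hJ //; apply/forallP => i.
have hi : (i:nat) < k by apply: (leq_trans (ltn_ord i)); rewrite ?cardCk ?hJ.
by rewrite sl_C // nth_iota // add0n sl_ge // hJ.
Qed.

Lemma G1 t J : #|J| = k -> 0 < k -> k <= n -> gale_le t J (C t) -> J = C t.
Proof.
move=> hJ hk0 hk; rewrite gale_nth ?cardCk ?hJ // => /forallP h.
apply: sl_top => //.
have hi : k.-1 < k by lia.
have := h (Ordinal hi); rewrite sl_C //= nth_iota; lia.
Qed.

Lemma G2 t J : #|J| = k -> 2 <= k -> k < n -> J != C t -> gale_le t (D t) J.
Proof.
move=> hJ hk2 hk hne; rewrite gale_nth ?cardD ?hJ //; apply/forallP => i.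
have hi : (i:nat) < k by apply: (leq_trans (ltn_ord i)); rewrite ?cardD ?hJ.
rewrite sl_D // nth_rcons size_iota.
case: ltnP => h1.
  by rewrite nth_iota // add0n sl_ge // hJ.
have -> : (i:nat) = k.-1 by lia.
rewrite eqxx; case: leqP => // hl.
by move: hne; rewrite (sl_top (t:=t) hJ) ?eqxx //; lia.
Qed.

Lemma G2' t : 2 <= k -> k < n -> ~~ gale_le t (D t) (C t).
Proof.
move=> hk2 hk; rewrite gale_nth ?cardD ?cardCk //; last by lia.
apply/forallP => h.
have hi : k.-1 < k by lia.
have := h (Ordinal hi); rewrite sl_D // sl_C /= ?nth_rcons ?size_iota ?ltnn ?eqxx ?nth_iota; lia.
Qed.

End Gale.

Section Mat.
Variable n : nat.
Implicit Types X S J C : {set 'I_n}.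
Implicit Types B : {set {set 'I_n}}.

Lemma dep_circuit B m X : #|X| = m -> ~~ independent B X ->
  exists2 C : {set 'I_n}, C \subset X & circuit B C.
Proof.
elim: m X => [|m IH] X hX hdep;
  (case: (boolP [forall x in X, independent B (X :\ x)]) => h;
    [by exists X => //; rewrite /circuit hdep h|]);
  move/forallPn: h => [x]; rewrite negb_imply => /andP[xX hx].
  by move: hX; rewrite (cardsD1 x) xX.
have [|C hC hc] := IH (X :\ x) _ hx; first by move: hX; rewrite (cardsD1 x) xX; lia.
by exists C => //; apply: subset_trans hC (subsetDl _ _).
Qed.

Lemma ML B k (hM : is_matroid B) (hr : has_rank k B) (hsp : sparse_paving k B)
  (k1 : 0 < k) (kn : k < n) S a b (aS : a \notin S) (bS : b \notin S) (ab : a != b)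
  (cS : #|S| = k.-1) (na : a |: S \notin B) (nb : b |: S \notin B) : False.
Proof.
have indS : independent B S.
  apply: contraT => hd; have [C hC hc] := dep_circuit (erefl _) hd.
  have := hsp.1 C hc; have := subset_leq_card hC; rewrite cS.
  move: #|C| => u; clear -k1; lia.
case/existsP: indS => J0 /andP[hJ0 SJ0].
have cJ0 := hr _ hJ0.
have [c cJ0' cS'] : exists2 c, c \in J0 & c \notin S.
  apply/subsetPn; apply: contraT; rewrite negbK => /subset_leq_card; rewrite cS cJ0; clear -k1; lia.
have eJ0 : J0 = c |: S.
  apply/eqP; rewrite eq_sym eqEcard subUset sub1set cJ0' SJ0 cardsU1 cS' cS cJ0 /=; clear -k1; lia.
have ca : c != a by apply: contraNneq na => <-; rewrite -eJ0.
have cb : c != b by apply: contraNneq nb => <-; rewrite -eJ0.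
set U := a |: (b |: S).
have cU : #|U| = k.+1.
  rewrite /U !cardsU1 cS bS !inE negb_or ab aS /=; clear -k1; lia.
have indT : independent (dual_bases B) (~: U).
  apply: contraT => hd; have [C hC hc] := dep_circuit (erefl _) hd.
  have := hsp.2 C hc; have := subset_leq_card hC.
  have := cardsC U; rewrite card_ord cU.
  move: #|~: U| #|C| => u v; clear -kn; lia.
case/existsP: indT => J' /andP[/imsetP[J hJ ->]]; rewrite setCS => JU.
have cJ : c \notin J.
  apply/negP => /(subsetP JU); rewrite !inE (negbTE ca) (negbTE cb) (negbTE cS').
  by [].
have cD : c \in J0 :\: J by rewrite inE cJ cJ0'.
have [y] := hM.2 J0 J hJ0 hJ c cD.
rewrite inE => /andP[yJ0 yJ].
have := subsetP JU y yJ; rewrite !inE.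
rewrite eJ0 setU1K // setUC.
have yS : y \notin S by apply: contra yJ0 => yS; rewrite eJ0 inE yS orbT.
rewrite (negbTE yS) orbF => /orP[] /eqP ->; by [move/negbTE: na => -> | move/negbTE: nb => ->].
Qed.

End Mat.

Section Cyc.
Variable n k : nat.
Hypothesis hk2 : 2 <= k.
Hypothesis hkn : k + 2 <= n.
Implicit Types t x y s : 'I_n.
Implicit Types X S J : {set 'I_n}.
Implicit Types B : {set {set 'I_n}}.
Local Notation C t := (cyc_interval k t).
Local Notation D t := (D k t).

Lemma inC t x : (x \in C t) = (trank t x < k).
Proof. by rewrite inE. Qed.

Lemma inD t x : (x \in D t) = (trank t x <= k) && (trank t x != k.-1).
Proof. by rewrite inE. Qed.

Lemma t_in_C t : t \in C t.
Proof. by rewrite inC trank_tt; lia. Qed.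

Lemma t_in_D t : t \in D t.
Proof. by rewrite inD trank_tt; lia. Qed.

Lemma cardCn t : #|C t| = k.
Proof. by rewrite cardCk //; lia. Qed.

Lemma cardDn t : #|D t| = k.
Proof. by rewrite cardD //; lia. Qed.

Lemma rank_ex t m : m < n -> {x | trank t x = m}.
Proof.
move=> hm; have h := trank_surj t hm.
case: (pickP (fun x => trank t x == m)) => [x /eqP hx|none]; first by exists x.
by exfalso; case: h => x /eqP; rewrite none.
Qed.

Lemma C_succ t e : trank t e = k -> C (nsucc t) = e |: (C t :\ t).
Proof.
move=> he; apply/setP => x; rewrite !inE R1 -(trank_eq t) he -(trank0 t).
move: (trank t x) (trank_lt t x) => r hr; repeat case: ifP => ?; lia.
Qed.

Lemma P1 B (hM : is_matroid B) (hr : has_rank k B) (hsp : sparse_paving k B) t :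
  C t \notin B -> C (nsucc t) \notin B -> False.
Proof.
move=> h1 h2.
have hkn' : k < n by lia.
have [e he] := rank_ex t hkn'.
have hk0 : 0 < k by lia.
apply: (ML hM hr hsp hk0 hkn' (a := t) (b := e) (S := C t :\ t)).
- by rewrite setD11.
- by rewrite inE inC he ltnn andbF.
- by rewrite -(trank_eq t) he trank_tt eq_sym -lt0n.
- by have h := cardsD1 t (C t); rewrite t_in_C cardCn /= in h; rewrite {2}h add1n.
- by rewrite setD1K ?t_in_C.
- by rewrite -C_succ.
Qed.

Lemma spp_char B (hr : has_rank k B) : spp_map k B = [set i | C i \notin B].
Proof.
have hk0 : 0 < k by lia.
have hkn' : k <= n by lia.
apply/setP => i; rewrite !inE /necklace_of.
case: pickP => [J /andP[JB /forall_inP hJ] | none] /=.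
  case: (boolP (C i \in B)) => hC /=.
    by rewrite (G1 (hr J JB) hk0 hkn' (hJ _ hC)) eqxx.
  by apply/eqP => e; rewrite -e JB in hC.
have -> : C i \notin B.
  apply/negP => hC; have := none (C i); rewrite hC /=.
  by move/negP; apply; apply/forall_inP => J' hJ'; apply: G0 => //; apply: hr.
apply/eqP => e; have := cardCn i; rewrite -e cards0; lia.
Qed.

Lemma rank_pred t : trank t (npred t) = n.-1.
Proof.
have := R2 t (npred t); rewrite nsucc_npred trank_tt.
by case: eqP => // _ /esym/eqP; rewrite -lt0n.
Qed.

Lemma rank_succ t : trank t (nsucc t) = 1.
Proof. rewrite R2 trank_tt; case: eqP => //; lia. Qed.

Lemma C_inj i t : C i = C t -> i = t.
Proof.
move=> e; apply/eqP; apply: contraT => ne.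
have tC : t \in C i by rewrite e t_in_C.
have pC : npred t \notin C t by rewrite inC rank_pred -leqNgt; lia.
have ht := R2 i (npred t); rewrite nsucc_npred in ht.
have ht0 : trank i t != 0 by rewrite trank0 eq_sym.
move: pC; rewrite -e inC; move: tC; rewrite inC ht.
move: ht0; rewrite ht; move: (trank i (npred t)) => r; case: ifP => //; lia.
Qed.

Lemma two_out t s : s != t -> s != nsucc t -> t != nsucc s ->
  exists u, exists v, [/\ u != v, u \in C s, v \in C s, u \notin C t & v \notin C t].
Proof.
move=> h0 h1 h2.
have d0 : trank t s != 0 by rewrite trank0.
have d1 : trank t s != 1 by rewrite -(rank_succ t) trank_eq.
have dn : trank t s != n.-1.
  apply: contra h2 => /eqP hd; rewrite eq_sym -(trank_eq t) R2 hd eqxx trank_tt //.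
have dlt := trank_lt t s.
have R := R3 t s.
case: (ltnP (trank t s) k) => hd.
  have hk1 : k.+1 < n by lia.
  have [u hu] := rank_ex t (ltnW hk1); have [v hv] := rank_ex t hk1.
  exists u, v; split; rewrite ?inC ?R ?hu ?hv -?(trank_eq t) ?hu ?hv; try (case: ifP); lia.
have hd1 : (trank t s).+1 < n by lia.
have [v hv] := rank_ex t hd1.
exists s, v; split; rewrite ?inC ?R ?hv -?(trank_eq t) ?hv ?trank_tt; try (case: ifP); try lia.
Qed.


Lemma neck_form I (hN : grassmann_necklace k I) t :
  I (npred t) = C (npred t) -> I (nsucc t) = C (nsucc t) -> I t = C t \/ I t = D t.
Proof.
move=> hp hs.
have hX : C (npred t) :\ npred t = [set x | trank t x < k.-1].
  apply/setP => x; rewrite !inE R1' -(trank_eq t x (npred t)) rank_pred.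
  move: (trank t x) (trank_lt t x) => r hr; repeat case: ifP => ?; lia.
have := hN.2 (npred t); rewrite hp t_in_C => -[j]; rewrite nsucc_npred hX => hIt.
have cX : #|[set x | trank t x < k.-1]| = k.-1 by rewrite card_rank //; lia.
have jX : k.-1 <= trank t j.
  have := hN.1 t; rewrite hIt setUC cardsU1 cX inE.
  by case: (ltnP (trank t j) k.-1) => //= _; rewrite add0n; lia.
have tIt : t \in I t.
  by rewrite hIt !inE trank_tt; apply/orP; left; lia.
have := hN.2 t; rewrite tIt hs => -[j' hj'].
have jC : j \in C (nsucc t).
  rewrite hj' !inE; apply/orP; left; rewrite hIt !inE eqxx orbT andbT.
  by rewrite -(trank_eq t) trank_tt -lt0n; lia.
rewrite inC R1 in jC.
have eI : I t = [set x | (trank t x < k.-1) || (trank t x == trank t j)].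
  by rewrite hIt; apply/setP => x; rewrite !inE (trank_eq t) orbC.
move: eI jX jC; move: (trank t j) => rho eI jX jC.
have [e1|e2] : rho = k.-1 \/ rho = k by move: jC; case: ifP => ? ?; lia.
  left; rewrite eI; apply/setP => x; rewrite !inE e1.
  move: (trank t x) => r; lia.
right; rewrite eI; apply/setP => x; rewrite !inE e2.
move: (trank t x) => r; lia.
Qed.

End Cyc.

Section Main.
Variable n k : nat.
Hypothesis hk2 : 2 <= k.
Hypothesis hkn : k + 2 <= n.
Implicit Types t x y s : 'I_n.
Implicit Types X Y S J : {set 'I_n}.
Implicit Types B : {set {set 'I_n}}.
Local Notation C t := (cyc_interval k t).
Local Notation D t := (D k t).

Definition Bset (A : {set 'I_n}) : {set {set 'I_n}} :=
  [set J : {set 'I_n} | (#|J| == k) && [forall t in A, J != C t]].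

Lemma part1 B : sparse_paving_positroid k B -> non_adjacent (spp_map k B).
Proof.
move=> [[hM [hr _]] hsp].
rewrite (spp_char hk2 hkn hr); apply/forallP => i; apply/implyP; rewrite !inE => hi.
apply/andP; split; rewrite negbK; apply: contraT => h.
  by case: (P1 hk2 hkn hM hr hsp h); rewrite nsucc_npred.
by case: (P1 hk2 hkn hM hr hsp hi h).
Qed.

Lemma part2 B : sparse_paving_positroid k B -> B = Bset [set i | C i \notin B].
Proof.
move=> hB; have hna := part1 hB; move: hB => [[hM [hr [I [hN hBI]]]] hsp].
rewrite (spp_char hk2 hkn hr) in hna.
have hk0 : 0 < k by lia.
have hkn' : k <= n by lia.
have hIC t : C t \in B -> I t = C t.
  rewrite {1}hBI inE => /andP[_ /forallP h].
  exact: G1 (hN.1 t) hk0 hkn' (h t).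
apply/setP => J; rewrite [J \in Bset _]inE; apply/idP/idP.
  move=> JB; rewrite (hr J JB) eqxx /=; apply/forall_inP => t; rewrite inE => ht.
  by apply/eqP => e; rewrite -e JB in ht.
move=> /andP[/eqP hJ /forall_inP hA]; rewrite hBI inE hJ eqxx /=; apply/forallP => s.
case: (boolP (C s \in B)) => hs; first by rewrite hIC //; apply: G0.
have sA : s \in [set i | C i \notin B] by rewrite inE.
have := forallP hna s; rewrite sA /= !inE !negbK => /andP[h1 h2].
have hkn1 : k < n by lia.
case: (neck_form hk2 hkn hN (hIC _ h1) (hIC _ h2)) => ->; first exact: G0.
by apply: G2 => //; apply: hA.
Qed.

Lemma ext_card Y d : forall X, X \subset Y -> #|X| + d <= #|Y| ->
  exists X', [/\ X \subset X', X' \subset Y & #|X'| = #|X| + d].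
Proof.
elim: d => [|d IH] X hXY hc; first by exists X; rewrite addn0.
have [y yY yX] : exists2 y, y \in Y & y \notin X.
  apply/subsetPn; apply: contraT; rewrite negbK => /subset_leq_card h.
  by have := leq_trans hc h; rewrite addnS ltnNge leq_addr.
have h1' : y |: X \subset Y by rewrite subUset sub1set yY hXY.
have h2' : #|y |: X| + d <= #|Y| by rewrite cardsU1 yX add1n addSn -addnS.
have [X' [h1 h2 h3]] := IH _ h1' h2'.
exists X'; split => //; first by apply: subset_trans h1; apply: subsetUr.
by rewrite h3 cardsU1 yX add1n addSn addnS.
Qed.

Variable A : {set 'I_n}.
Hypothesis hA : non_adjacent A.

Lemma nadj i : i \in A -> (npred i \notin A) && (nsucc i \notin A).
Proof. by move=> iA; have := forallP hA i; rewrite iA. Qed.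

Lemma BC i : (C i \in Bset A) = (i \notin A).
Proof.
rewrite inE cardCn // eqxx /=; apply/forall_inP/idP => [h | hi t tA].
  by apply/negP => iA; have := h i iA; rewrite eqxx.
by apply/eqP => e; rewrite (C_inj hk2 hkn e) tA in hi.
Qed.

Lemma TC X y1 y2 : #|X| = k.-1 -> y1 != y2 -> y1 \notin X -> y2 \notin X ->
  (y1 |: X \in Bset A) \/ (y2 |: X \in Bset A).
Proof.
move=> hX h12 h1 h2.
case: (boolP (y1 |: X \in Bset A)) => b1; [by left|].
case: (boolP (y2 |: X \in Bset A)) => b2; [by right|]; exfalso.
have hc1 : #|y1 |: X| = k by rewrite cardsU1 h1 hX /=; lia.
have hc2 : #|y2 |: X| = k by rewrite cardsU1 h2 hX /=; lia.
move: b1; rewrite inE hc1 eqxx /= => /forall_inPn [t tA]; rewrite negbK => /eqP e1.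
move: b2; rewrite inE hc2 eqxx /= => /forall_inPn [s sA]; rewrite negbK => /eqP e2.
have st : s != t.
  apply/eqP => est; move: e2; rewrite est -e1 => e.
  have : y2 \in y1 |: X by rewrite -e setU11.
  by rewrite !inE (negbTE h2) orbF eq_sym (negbTE h12).
have s1 : s != nsucc t by apply/eqP => e; move: (nadj tA); rewrite -e sA andbF.
have t1 : t != nsucc s by apply/eqP => e; move: (nadj sA); rewrite -e tA andbF.
have [u [v [uv uC vC uC' vC']]] := two_out hk2 hkn st s1 t1.
have get z : z \in C s -> z \notin C t -> z = y2.
  rewrite -e1 -e2 !inE => /orP[/eqP //|zX]; by rewrite zX orbT.
by move: uv; rewrite (get u uC uC') (get v vC vC') eqxx.
Qed.

Lemma indep_in X Y : X \subset Y -> #|X| <= k.-1 -> k.+1 <= #|Y| ->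
  exists2 J, J \in Bset A & X \subset J /\ J \subset Y.
Proof.
move=> hXY hX hY.
have hc : #|X| + (k.-1 - #|X|) <= #|Y| by rewrite subnKC //; apply: leq_trans hY; lia.
have [X' [h1 h2 h3]] := ext_card hXY hc.
have cX' : #|X'| = k.-1 by rewrite h3 subnKC.
have : 1 < #|Y :\: X'| by rewrite cardsD (setIidPr h2) cX'; lia.
case/card_gt1P => y1 [y2 [hy1 hy2 y12]].
move: hy1 hy2; rewrite !inE => /andP[y1X y1Y] /andP[y2X y2Y].
case: (TC cX' y12 y1X y2X) => hb.
  exists (y1 |: X') => //; split; first exact: subset_trans h1 (subsetUr _ _).
  by rewrite subUset sub1set y1Y h2.
exists (y2 |: X') => //; split; first exact: subset_trans h1 (subsetUr _ _).
by rewrite subUset sub1set y2Y h2.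
Qed.


Definition Ineck (t : 'I_n) : {set 'I_n} := if t \in A then D t else C t.

Lemma Ineck_neck : grassmann_necklace k Ineck.
Proof.
split => [t|i]; first by rewrite /Ineck; case: ifP => _; [apply: cardDn | apply: cardCn].
have -> : i \in Ineck i by rewrite /Ineck; case: ifP => _; [apply: t_in_D | apply: t_in_C].
rewrite /Ineck; case: (boolP (i \in A)) => iA.
  have := nadj iA => /andP[_ /negbTE ->].
  have hm : k.-1 < n by lia.
  have [e he] := rank_ex i hm; exists e.
  apply/setP => x; rewrite !inE R1 -(trank_eq i x e) he -(trank0 i).
  move: (trank i x) (trank_lt i x) => r hr; repeat case: ifP => ?; lia.
case: ifP => _.
  have hm : k.+1 < n by lia.
  have [e he] := rank_ex i hm; exists e.
  apply/setP => x; rewrite !inE R1 -(trank_eq i x e) he -(trank0 i).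
  move: (trank i x) (trank_lt i x) => r hr; repeat case: ifP => ?; lia.
have hm : k < n by lia.
have [e he] := rank_ex i hm; exists e.
by rewrite (C_succ hk2 hkn he) setUC.
Qed.

Lemma Bset_neck : Bset A = necklace_bases k Ineck.
Proof.
apply/setP => J; rewrite !inE; case: (eqVneq #|J| k) => hJ //=.
have hk1 : k < n by lia.
have hk0 : k <= n by lia.
apply/forall_inP/forallP => [h s | h t tA].
  rewrite /Ineck; case: ifP => sA; last exact: G0.
  by apply: G2 => //; apply: h.
have := h t; rewrite /Ineck tA => g; apply: contraTneq g => ->; exact: G2'.
Qed.

Lemma Bset_rank : has_rank k (Bset A).
Proof. by move=> J; rewrite inE => /andP[/eqP]. Qed.

Lemma Bset_matroid : is_matroid (Bset A).
Proof.
split.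
  have t0 : 'I_n by exists 0; lia.
  apply/set0Pn; case: (boolP (t0 \in A)) => tA.
    exists (C (nsucc t0)); rewrite BC; by have := nadj tA => /andP[].
  by exists (C t0); rewrite BC.
move=> B1 B2 hB1 hB2 x hx.
have c1 := Bset_rank hB1; have c2 := Bset_rank hB2.
have cd : #|B2 :\: B1| = #|B1 :\: B2| by rewrite !cardsD setIC c1 c2.
have xB1 : x \in B1 by move: hx; rewrite inE => /andP[].
have cX : #|B1 :\ x| = k.-1.
  by have h := cardsD1 x B1; rewrite xB1 c1 /= in h; rewrite h add1n.
case: (ltnP 1 #|B2 :\: B1|) => h.
  case/card_gt1P: h => y1 [y2 [hy1 hy2 y12]].
  have ny z : z \in B2 :\: B1 -> z \notin B1 :\ x.
    by rewrite !inE => /andP[zB1 _]; rewrite (negbTE zB1) andbF.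
  case: (TC cX y12 (ny _ hy1) (ny _ hy2)) => hb.
    by exists y1 => //; rewrite setUC.
  by exists y2 => //; rewrite setUC.
have h1 : #|B2 :\: B1| == 1.
  by rewrite eqn_leq h /= cd card_gt0; apply/set0Pn; exists x.
have h1' : #|B1 :\: B2| == 1 by rewrite -cd.
case/cards1P: h1 => y ey; case/cards1P: h1' => x' ex'.
have xx' : x = x' by move: hx; rewrite ex' inE => /eqP.
have yB : y \in B2 :\: B1 by rewrite ey set11.
exists y => //.
have -> : (B1 :\ x) :|: [set y] = B2; last by [].
move: yB; rewrite inE => /andP[yB1 yB2].
apply/eqP; rewrite eqEcard c2 setUC cardsU1 cX !inE (negbTE yB1) andbF /=.
rewrite add1n (ltn_predK hk2) leqnn andbT subUset sub1set yB2 /=.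
apply/subsetP => z; rewrite !inE => /andP[zx zB1].
apply: contraT => zB2.
have : z \in B1 :\: B2 by rewrite inE zB2 zB1.
by rewrite ex' -xx' inE (negbTE zx).
Qed.

Lemma Bset_sp : sparse_paving k (Bset A).
Proof.
split.
  move=> Cc /andP[hd _]; rewrite leqNgt; apply/negP => hlt.
  have hX : #|Cc| <= k.-1 by lia.
  have hY : k.+1 <= #|[set: 'I_n]| by rewrite cardsT card_ord; lia.
  have [J hJ [h1 _]] := indep_in (subsetT Cc) hX hY.
  by move/negP: hd; apply; apply/existsP; exists J; rewrite hJ h1.
move=> Cc /andP[hd _]; rewrite leqNgt; apply/negP => hlt.
have hc : k.+1 <= #|~: Cc|.
  have := cardsC Cc; rewrite card_ord => e.
  rewrite -(leq_add2l #|Cc|) e; lia.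
have h0 : #|(set0 : {set 'I_n})| <= k.-1 by rewrite cards0.
have [J hJ [_ h2]] := indep_in (sub0set (~: Cc)) h0 hc.
move/negP: hd; apply; apply/existsP; exists (~: J).
by rewrite imset_f //= subsetC.
Qed.

Lemma part3 : exists B, sparse_paving_positroid k B /\ spp_map k B = A.
Proof.
exists (Bset A); split.
  split; last exact: Bset_sp.
  split; first exact: Bset_matroid.
  split; first exact: Bset_rank.
  by exists Ineck; split; [exact: Ineck_neck | exact: Bset_neck].
rewrite (spp_char hk2 hkn Bset_rank); apply/setP => i; by rewrite in_set BC negbK.
Qed.

End Main.

Theorem corollary3p3 (n k : nat) :
  2 <= k -> k <= n - 2 ->
  (forall B : {set {set 'I_n}}, sparse_paving_positroid k B ->
     non_adjacent (spp_map k B)) /\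
  (forall B1 B2 : {set {set 'I_n}},
     sparse_paving_positroid k B1 -> sparse_paving_positroid k B2 ->
     spp_map k B1 = spp_map k B2 -> B1 = B2) /\
  (forall A : {set 'I_n}, non_adjacent A ->
     exists B : {set {set 'I_n}}, sparse_paving_positroid k B /\ spp_map k B = A).
Proof.
move=> hk2 hkn'.
have hkn : k + 2 <= n by lia.
split; first by move=> B; apply: part1.
split; last by move=> A hA; apply: part3.
move=> B1 B2 h1 h2 e.
have hr1 := h1.1.2.1; have hr2 := h2.1.2.1.
rewrite (part2 hk2 hkn h1) (part2 hk2 hkn h2).
by move: e; rewrite !(spp_char hk2 hkn) // => ->.
Qed.
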